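(* Assume $\frac\pi2<\omega<\pi$ and $q>0$. For every $(a,f,g)\in\mathcal C$ there is a function $\tilde f$ with $0\le\tilde f(r)\le\frac\pi2$ for all $r\ge0$ such that $(a,\tilde f,g)\in\mathcal C$ and $L(a,\tilde f,g)\le L(a,f,g)$. Consequently, in minimizing $L$ over $\mathcal C$ one may restrict to functions $f$ with $0\le f\le\frac\pi2$.
   Context: Fix $\kappa>0$, $\omega\in(\frac\pi2,\pi)$, $q>0$; $'=d/dr$. Define $\mathcal E_1=2\big(2(a')^2+\frac{(a^2-1)^2}{r^2}\big)+\frac12\big(r^2(f')^2+2a^2\sin^2f\big)+2\kappa a^2\sin^2f\big(2(f')^2+\frac{a^2\sin^2f}{r^2}\big)$, $\mathcal E_2=r^2(g')^2+2a^2g^2$, $L(a,f,g)=\int_0^\infty(\mathcal E_1-\mathcal E_2)\,dr$, $E(a,f,g)=\int_0^\infty(\mathcal E_1+\mathcal E_2)\,dr$, and for functions $a,G$, $E_2(a,G)=\int_0^\infty(r^2(G')^2+2a^2G^2)\,dr$. The admissible set $\mathcal A$ consists of triples $(a,f,g)$ of continuous functions on $[0,\infty)$ that are absolutely continuous on every compact subinterval of $(0,\infty)$, satisfy $a(0)=1$, $\lim_{r\to\infty}a(r)=0$, $f(0)=0$, $\lim_{r\to\infty}f(r)=\pi-\omega$, $\lim_{r\to\infty}g(r)=q$, and have $E(a,f,g)<\infty$. The constrained class $\mathcal C$ consists of those $(a,f,g)\in\mathcal A$ such that $\int_0^\infty(r^2g'G'+2a^2gG)\,dr=0$ for every function $G$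 on $(0,\infty)$, absolutely continuous on compact subintervals of $(0,\infty)$, with $G(r)\to0$ as $r\to\infty$ and $E_2(a,G)<\infty$. *)

(* Defs.v *)
From Stdlib Require Import Reals Lra.
Open Scope R_scope.

Fixpoint rsum (n : nat) (f : nat -> R) : R :=
  match n with O => 0 | S k => rsum k f + f k end.

Definition is_glb (E : R -> Prop) (m : R) : Prop :=
  (forall s, E s -> m <= s) /\ (forall m', (forall s, E s -> m' <= s) -> m' <= m).

Definition null_set (A : R -> Prop) : Prop :=
  forall eps, 0 < eps -> exists (an bn : nat -> R),
    (forall x, A x -> exists n, an n < x < bn n) /\
    (forall n, an n <= bn n) /\
    (forall N, rsum N (fun n => bn n - an n) <= eps).

Definition closed_set (K : R -> Prop) : Prop :=
  forall x, ~ K x -> exists d, 0 < d /\ forall y, Rabs (y - x) < d -> ~ K y.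
Definition bounded_set (K : R -> Prop) : Prop :=
  exists M, forall x, K x -> Rabs x <= M.
Definition compact_set (K : R -> Prop) : Prop := closed_set K /\ bounded_set K.

(* Lebesgue measure of a compact set = inf of total lengths of finite open covers *)
Definition compact_measure (K : R -> Prop) (m : R) : Prop :=
  is_glb (fun s => exists (n : nat) (an bn : nat -> R),
            (forall i, (i < n)%nat -> an i <= bn i) /\
            (forall x, K x -> exists i, (i < n)%nat /\ an i < x < bn i) /\
            s = rsum n (fun i => bn i - an i)) m.

(* For a nonnegative (Lebesgue)
   measurable h, the supremum of these is the Lebesgue integral of h over
   (0,oo) (inner regularity of Lebesgue measure). *)
Definition lower_sums (h : R -> R) (v : R) : Prop :=
  exists (n : nat) (c : nat -> R) (K : nat -> R -> Prop) (m : nat -> R),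
    (forall i, (i < n)%nat ->
        0 <= c i /\ compact_set (K i) /\ (forall x, K i x -> 0 < x) /\
        compact_measure (K i) (m i) /\ (forall x, K i x -> c i <= h x)) /\
    (forall i j x, (i < n)%nat -> (j < n)%nat -> i <> j -> K i x -> K j x -> False) /\
    v = rsum n (fun i => c i * m i).

Definition nonneg_integral (h : R -> R) (I : R) : Prop := is_lub (lower_sums h) I.

Definition integral_is (h : R -> R) (I : R) : Prop :=
  exists Ip In, nonneg_integral (fun x => Rmax 0 (h x)) Ip /\
                nonneg_integral (fun x => Rmax 0 (- h x)) In /\ I = Ip - In.

Definition cont_on_nonneg (h : R -> R) : Prop :=
  forall x, 0 <= x -> forall eps, 0 < eps -> exists d, 0 < d /\
    forall y, 0 <= y -> Rabs (y - x) < d -> Rabs (h y - h x) < eps.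

Definition abs_cont_on (h : R -> R) (c d : R) : Prop :=
  forall eps, 0 < eps -> exists del, 0 < del /\
    forall (n : nat) (x y : nat -> R),
      (forall i, (i < n)%nat -> c <= x i /\ x i <= y i /\ y i <= d) /\
      (forall i, (S i < n)%nat -> y i <= x (S i)) ->
      rsum n (fun i => y i - x i) < del ->
      rsum n (fun i => Rabs (h (y i) - h (x i))) < eps.

Definition loc_abs_cont (h : R -> R) : Prop :=
  forall c d, 0 < c -> c <= d -> abs_cont_on h c d.

Definition ae_deriv (h dh : R -> R) : Prop :=
  null_set (fun r => 0 < r /\ ~ derivable_pt_lim h r (dh r)).

Definition lim_infty (h : R -> R) (l : R) : Prop :=
  forall eps, 0 < eps -> exists M, forall r, M <= r -> Rabs (h r - l) < eps.

Definition E1 (kappa : R) (a f da df : R -> R) (r : R) : R :=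
  2 * (2 * (da r)^2 + ((a r)^2 - 1)^2 / r^2)
  + / 2 * (r^2 * (df r)^2 + 2 * (a r)^2 * (sin (f r))^2)
  + 2 * kappa * (a r)^2 * (sin (f r))^2
      * (2 * (df r)^2 + (a r)^2 * (sin (f r))^2 / r^2).

Definition E2 (a g dg : R -> R) (r : R) : R :=
  r^2 * (dg r)^2 + 2 * (a r)^2 * (g r)^2.

Definition L_is (kappa : R) (a f g da df dg : R -> R) (l : R) : Prop :=
  integral_is (fun r => E1 kappa a f da df r - E2 a g dg r) l.

Definition admissible (kappa omega q : R) (a f g da df dg : R -> R) : Prop :=
  cont_on_nonneg a /\ cont_on_nonneg f /\ cont_on_nonneg g /\
  loc_abs_cont a /\ loc_abs_cont f /\ loc_abs_cont g /\
  ae_deriv a da /\ ae_deriv f df /\ ae_deriv g dg /\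
  a 0 = 1 /\ lim_infty a 0 /\
  f 0 = 0 /\ lim_infty f (PI - omega) /\
  lim_infty g q /\
  (exists I, nonneg_integral (fun r => E1 kappa a f da df r + E2 a g dg r) I).

Definition in_C (kappa omega q : R) (a f g da df dg : R -> R) : Prop :=
  admissible kappa omega q a f g da df dg /\
  forall G dG : R -> R,
    loc_abs_cont G -> ae_deriv G dG -> lim_infty G 0 ->
    (exists I, nonneg_integral (fun r => r^2 * (dG r)^2 + 2 * (a r)^2 * (G r)^2) I) ->
    integral_is (fun r => r^2 * dg r * dG r + 2 * (a r)^2 * g r * G r) 0.

(* Main.v *)
Require Import Defs.
From Stdlib Require Import Reals Lra Lia ZArith Classical ClassicalEpsilon Cantor FunctionalExtensionality.
Open Scope R_scope.

Definition kk (x : R) : Z := (up (x / PI + / 2) - 1)%Z.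
Definition phi (x : R) : R := Rabs (x - PI * IZR (kk x)).

Lemma kk_spec x : Rabs (x / PI - IZR (kk x)) <= / 2.
Proof.
  unfold kk. destruct (archimed (x / PI + / 2)) as [H1 H2].
  rewrite minus_IZR. apply Rabs_le. simpl (IZR 1). lra.
Qed.

Lemma PI_gt0 : 0 < PI. Proof. exact PI_RGT_0. Qed.

Lemma Rabs_PI_mult y : Rabs (PI * y) = PI * Rabs y.
Proof. rewrite Rabs_mult, Rabs_right; [reflexivity| left; exact PI_gt0]. Qed.

Lemma phi_ge0 x : 0 <= phi x.
Proof. apply Rabs_pos. Qed.

Lemma phi_le x : phi x <= PI / 2.
Proof.
  unfold phi. pose proof PI_gt0.
  replace (x - PI * IZR (kk x)) with (PI * (x / PI - IZR (kk x))) by (field; lra).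
  rewrite Rabs_PI_mult. pose proof (kk_spec x).
  apply Rmult_le_compat_l with (r := PI) in H0; lra.
Qed.

Lemma int_sep j k : j <> k -> 1 <= Rabs (IZR j - IZR k).
Proof.
  intro H. rewrite <- minus_IZR.
  assert (H' : (j - k >= 1)%Z \/ (j - k <= -1)%Z) by lia.
  destruct H' as [H'|H'].
  - apply Z.ge_le in H'. apply IZR_le in H'. rewrite Rabs_right; lra.
  - apply IZR_le in H'. rewrite Rabs_left; [lra|]. simpl in H'. lra.
Qed.

Lemma far_int x j k : j <> k -> Rabs (x - PI * IZR k) + Rabs (x - PI * IZR j) >= PI.
Proof.
  intro H. pose proof (int_sep j k H). pose proof PI_gt0.
  assert (E : PI * (IZR j - IZR k) = (x - PI * IZR k) + - (x - PI * IZR j)) by ring.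
  pose proof (Rabs_triang (x - PI * IZR k) (- (x - PI * IZR j))).
  rewrite <- E, Rabs_Ropp, Rabs_PI_mult in H2.
  apply Rmult_le_compat_l with (r := PI) in H0; lra.
Qed.

Lemma phi_min x j : phi x <= Rabs (x - PI * IZR j).
Proof.
  destruct (Z.eq_dec j (kk x)) as [->|H]; [unfold phi; lra|].
  pose proof (far_int x j (kk x) H). pose proof (phi_le x). unfold phi in *. lra.
Qed.

Lemma phi_unique x m : Rabs (x - PI * IZR m) < PI / 2 -> phi x = Rabs (x - PI * IZR m).
Proof.
  intro H. destruct (Z.eq_dec m (kk x)) as [->|Hn]; [reflexivity|].
  pose proof (far_int x m (kk x) Hn). pose proof (phi_le x). unfold phi in *. lra.
Qed.

Lemma phi_lip x y : Rabs (phi x - phi y) <= Rabs (x - y).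
Proof.
  pose proof (phi_min x (kk y)). pose proof (phi_min y (kk x)).
  pose proof (Rabs_triang (x - y) (y - PI * IZR (kk y))).
  pose proof (Rabs_triang (y - x) (x - PI * IZR (kk x))).
  replace (x - y + (y - PI * IZR (kk y))) with (x - PI * IZR (kk y)) in H1 by ring.
  replace (y - x + (x - PI * IZR (kk x))) with (y - PI * IZR (kk x)) in H2 by ring.
  rewrite (Rabs_minus_sym y x) in H2. fold (phi x) in H2. fold (phi y) in H1.
  apply Rabs_le. lra.
Qed.

Lemma phi_sin x : sin (phi x) ^ 2 = sin x ^ 2.
Proof.
  unfold phi. set (y := x - PI * IZR (kk x)).
  assert (E : sin (Rabs y) ^ 2 = sin y ^ 2).
  { unfold Rabs; destruct (Rcase_abs y); [rewrite sin_neg; ring | reflexivity]. }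
  rewrite E. unfold y. rewrite sin_minus.
  assert (S0 : sin (PI * IZR (kk x)) = 0).
  { apply sin_eq_0_1. exists (kk x). ring. }
  pose proof (sin2_cos2 (PI * IZR (kk x))). rewrite S0 in H. unfold Rsqr in H.
  rewrite S0. replace ((sin x * cos (PI * IZR (kk x)) - cos x * 0) ^ 2)
    with (sin x ^ 2 * (cos (PI * IZR (kk x)) * cos (PI * IZR (kk x)))) by ring.
  replace (cos (PI * IZR (kk x)) * cos (PI * IZR (kk x))) with 1 by lra. ring.
Qed.

Lemma phi_small c : 0 <= c < PI / 2 -> phi c = c.
Proof.
  intro H. rewrite (phi_unique c 0); simpl; rewrite Rmult_0_r, Rminus_0_r, Rabs_right; lra.
Qed.

Definition sgn (x : R) : R := if Rle_dec 0 (x - PI * IZR (kk x)) then 1 else -1.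

Lemma phi_deriv x : 0 < Rabs (x - PI * IZR (kk x)) < PI / 2 ->
  derivable_pt_lim phi x (sgn x).
Proof.
  intros [H1 H2]. set (u := x - PI * IZR (kk x)) in *.
  intros eps Heps.
  assert (Hd : 0 < Rmin (Rabs u) (PI / 2 - Rabs u)) by (apply Rmin_pos; lra).
  exists (mkposreal _ Hd). intros h Hh Hlt. change (Rabs h < Rmin (Rabs u) (PI / 2 - Rabs u)) in Hlt.
  pose proof (Rmin_l (Rabs u) (PI / 2 - Rabs u)).
  pose proof (Rmin_r (Rabs u) (PI / 2 - Rabs u)).
  assert (E : x + h - PI * IZR (kk x) = u + h) by (unfold u; ring).
  assert (Hp : phi (x + h) = Rabs (u + h)).
  { rewrite <- E. apply phi_unique. rewrite E.
    pose proof (Rabs_triang u h). lra. }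
  rewrite Hp. unfold phi. fold u. unfold sgn. fold u.
  destruct (Rle_dec 0 u) as [Hu|Hu].
  - assert (Eu : Rabs u = u) by (apply Rabs_right; lra). rewrite Eu in *.
    assert (Rabs h < u) by lra. apply Rabs_def2 in H3.
    assert (Euh : Rabs (u + h) = u + h) by (apply Rabs_right; lra). rewrite Euh.
    replace ((u + h - u) / h - 1) with 0 by (field; exact Hh).
    rewrite Rabs_R0; lra.
  - assert (Eu : Rabs u = - u) by (apply Rabs_left; lra). rewrite Eu in *.
    assert (Rabs h < - u) by lra. apply Rabs_def2 in H3.
    assert (Euh : Rabs (u + h) = - (u + h)) by (apply Rabs_left; lra). rewrite Euh.
    replace ((- (u + h) - - u) / h - -1) with 0 by (field; exact Hh).
    rewrite Rabs_R0; lra.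
Qed.

Lemma comp_good f r l : derivable_pt_lim f r l ->
  0 < Rabs (f r - PI * IZR (kk (f r))) < PI / 2 ->
  derivable_pt_lim (fun t => phi (f t)) r (sgn (f r) * l).
Proof.
  intros Hf Hk.
  exact (derivable_pt_lim_comp f phi r l (sgn (f r)) Hf (phi_deriv _ Hk)).
Qed.

Lemma comp_flat f r : derivable_pt_lim f r 0 ->
  derivable_pt_lim (fun t => phi (f t)) r 0.
Proof.
  intros Hf eps Heps. destruct (Hf eps Heps) as [d Hd]. exists d.
  intros h Hh Hlt. specialize (Hd h Hh Hlt).
  rewrite Rminus_0_r in *.
  apply Rle_lt_trans with (2 := Hd). unfold Rdiv. rewrite !Rabs_mult.
  apply Rmult_le_compat_r; [apply Rabs_pos| apply phi_lip].
Qed.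

Lemma kink_case x : ~ (0 < Rabs (x - PI * IZR (kk x)) < PI / 2) ->
  exists j : Z, x = IZR j * (PI / 2).
Proof.
  intro H. pose proof (phi_le x). unfold phi in H0.
  pose proof (Rabs_pos (x - PI * IZR (kk x))).
  destruct (Req_dec (Rabs (x - PI * IZR (kk x))) 0) as [E|E].
  - exists (2 * kk x)%Z. rewrite mult_IZR.
    assert (E0 : x - PI * IZR (kk x) = 0).
    { destruct (Req_dec (x - PI * IZR (kk x)) 0) as [?|Hne]; [auto| apply Rabs_no_R0 in Hne; contradiction]. }
    simpl (IZR 2). lra.
  - assert (E2 : Rabs (x - PI * IZR (kk x)) = PI / 2) by lra.
    unfold Rabs in E2. destruct (Rcase_abs _).
    + exists (2 * kk x - 1)%Z. rewrite minus_IZR, mult_IZR. simpl (IZR 2). simpl (IZR 1). lra.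
    + exists (2 * kk x + 1)%Z. rewrite plus_IZR, mult_IZR. simpl (IZR 2). simpl (IZR 1). lra.
Qed.

Lemma null_sub (A B : R -> Prop) : (forall x, A x -> B x) -> null_set B -> null_set A.
Proof.
  intros HAB HB eps He. destruct (HB eps He) as (an & bn & H1 & H2 & H3).
  exists an, bn. split; [|split]; auto.
Qed.

Lemma rsum_le n u v : (forall i, (i < n)%nat -> u i <= v i) -> rsum n u <= rsum n v.
Proof.
  induction n; simpl; intros H; [lra|].
  pose proof (H n (Nat.lt_succ_diag_r n)).
  assert (rsum n u <= rsum n v) by (apply IHn; intros; apply H; lia). lra.
Qed.

Lemma rsum_mono n m u : (forall i, 0 <= u i) -> (n <= m)%nat -> rsum n u <= rsum m u.
Proof.
  intros Hu Hnm. induction Hnm; simpl; [lra|]. specialize (Hu m). lra.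
Qed.

Definition interl (u v : nat -> R) (n : nat) : R :=
  if Nat.even n then u (Nat.div2 n) else v (Nat.div2 n).

Lemma even_double n : Nat.even (2 * n) = true.
Proof. rewrite Nat.even_mul. reflexivity. Qed.
Lemma even_sdouble n : Nat.even (S (2 * n)) = false.
Proof. rewrite Nat.even_succ, Nat.odd_mul. reflexivity. Qed.
Lemma div2_double' n : Nat.div2 (2 * n) = n.
Proof. apply Nat.div2_double. Qed.
Lemma div2_sdouble n : Nat.div2 (S (2 * n)) = n.
Proof. apply Nat.div2_succ_double. Qed.

Lemma rsum_interl M u v :
  rsum (2 * M) (interl u v) = rsum M u + rsum M v.
Proof.
  induction M; simpl; [lra|].
  replace (M + S (M + 0))%nat with (S (2 * M)) by lia. simpl.
  replace (M + (M + 0))%nat with (2 * M)%nat in * by lia.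
  rewrite IHM. unfold interl. rewrite even_double, even_sdouble, div2_double', div2_sdouble.
  lra.
Qed.

Lemma null_union (A B : R -> Prop) : null_set A -> null_set B ->
  null_set (fun x => A x \/ B x).
Proof.
  intros HA HB eps He.
  destruct (HA (eps / 2) ltac:(lra)) as (a1 & b1 & H1 & H2 & H3).
  destruct (HB (eps / 2) ltac:(lra)) as (a2 & b2 & K1 & K2 & K3).
  exists (interl a1 a2), (interl b1 b2). split; [|split].
  - intros x [Hx|Hx].
    + destruct (H1 x Hx) as [n Hn]. exists (2 * n)%nat. unfold interl.
      rewrite even_double, div2_double'. exact Hn.
    + destruct (K1 x Hx) as [n Hn]. exists (S (2 * n)). unfold interl.
      rewrite even_sdouble, div2_sdouble. exact Hn.
  - intro n. unfold interl. destruct (Nat.even n); auto.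
  - intro N.
    assert (Hnn : forall i, 0 <= interl b1 b2 i - interl a1 a2 i).
    { intro i. unfold interl. destruct (Nat.even i); [pose proof (H2 (Nat.div2 i))|pose proof (K2 (Nat.div2 i))]; lra. }
    apply Rle_trans with (rsum (2 * N) (fun n => interl b1 b2 n - interl a1 a2 n)).
    { apply rsum_mono; [exact Hnn| lia]. }
    replace (fun n => interl b1 b2 n - interl a1 a2 n) with
      (interl (fun n => b1 n - a1 n) (fun n => b2 n - a2 n)).
    2: { apply functional_extensionality_dep. intro n. unfold interl. destruct (Nat.even n); reflexivity. }
    rewrite rsum_interl. specialize (H3 N). specialize (K3 N). lra.
Qed.

Lemma rsum_geom eps N : rsum N (fun n => eps / 2 ^ (S n)) = eps - eps / 2 ^ N.
Proof.
  induction N; [simpl; field|].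
  change (rsum (S N) (fun n => eps / 2 ^ S n)) with (rsum N (fun n => eps / 2 ^ S n) + eps / 2 ^ S N).
  rewrite IHN. simpl. field. apply pow_nonzero. lra.
Qed.

Lemma null_countable (A : R -> Prop) (e : nat -> R) :
  (forall x, A x -> exists n, x = e n) -> null_set A.
Proof.
  intros H eps He.
  exists (fun n => e n - eps / 2 ^ (S (S n))), (fun n => e n + eps / 2 ^ (S (S n))).
  assert (Hp : forall n, 0 < eps / 2 ^ (S (S n))).
  { intro n. apply Rdiv_lt_0_compat; [lra| apply pow_lt; lra]. }
  split; [|split].
  - intros x Hx. destruct (H x Hx) as [n ->]. exists n. pose proof (Hp n). lra.
  - intro n. pose proof (Hp n). lra.
  - intro N. cbv beta. replace (fun n => e n + eps / 2 ^ S (S n) - (e n - eps / 2 ^ S (S n)))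
      with (fun n => eps / 2 ^ (S n)).
    2: { apply functional_extensionality_dep. intro n. simpl. field. apply pow_nonzero. lra. }
    rewrite rsum_geom. assert (0 < eps / 2 ^ N) by (apply Rdiv_lt_0_compat; [lra| apply pow_lt; lra]).
    lra.
Qed.

Lemma iso f x l : derivable_pt_lim f x l -> l <> 0 ->
  exists d, 0 < d /\ forall y, Rabs (y - x) < d -> f y = f x -> y = x.
Proof.
  intros Hf Hl. assert (Hp : 0 < Rabs l) by (apply Rabs_pos_lt; exact Hl).
  destruct (Hf (Rabs l) Hp) as [d Hd]. exists d. split; [apply cond_pos|].
  intros y Hy Hfy. apply NNPP. intro Hne.
  assert (Hh : y - x <> 0) by lra.
  specialize (Hd (y - x) Hh Hy). replace (x + (y - x)) with y in Hd by ring.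
  rewrite Hfy in Hd. replace ((f x - f x) / (y - x) - l) with (- l) in Hd by (field; exact Hh).
  rewrite Rabs_Ropp in Hd. lra.
Qed.

Definition zdec (n : nat) : Z := (Z.of_nat (fst (Cantor.of_nat n)) - Z.of_nat (snd (Cantor.of_nat n)))%Z.
Definition zenc (z : Z) : nat := Cantor.to_nat (Z.to_nat z, Z.to_nat (- z)).
Lemma zdec_enc z : zdec (zenc z) = z.
Proof. unfold zdec, zenc. rewrite Cantor.cancel_of_to. simpl. lia. Qed.

Definition cj n := zdec (fst (Cantor.of_nat n)).
Definition cp n := zdec (fst (Cantor.of_nat (snd (Cantor.of_nat n)))).
Definition cq n := zdec (fst (Cantor.of_nat (snd (Cantor.of_nat (snd (Cantor.of_nat n)))))).
Definition cd n := snd (Cantor.of_nat (snd (Cantor.of_nat (snd (Cantor.of_nat n))))).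
Definition enc j zp zq d := Cantor.to_nat (zenc j, Cantor.to_nat (zenc zp, Cantor.to_nat (zenc zq, d))).

Lemma enc_spec j zp zq d : let n := enc j zp zq d in
  cj n = j /\ cp n = zp /\ cq n = zq /\ cd n = d.
Proof.
  unfold enc, cj, cp, cq, cd. repeat (rewrite Cantor.cancel_of_to; cbn [fst snd]).
  rewrite !zdec_enc. repeat split; auto.
Qed.

Lemma isolated_enum (f : R -> R) (c : R) (A : R -> Prop) :
  (forall x, A x -> (exists j : Z, f x = IZR j * c) /\
     exists d, 0 < d /\ forall y, Rabs (y - x) < d -> f y = f x -> y = x) ->
  exists e : nat -> R, forall x, A x -> exists n, x = e n.
Proof.
  intro HA.
  set (P := fun n x => f x = IZR (cj n) * c /\
     IZR (cp n) / INR (cd n) < x < IZR (cq n) / INR (cd n) /\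
     forall y, IZR (cp n) / INR (cd n) < y < IZR (cq n) / INR (cd n) ->
               f y = IZR (cj n) * c -> y = x).
  exists (fun n => epsilon (inhabits 0) (P n)).
  intros x Hx. destruct (HA x Hx) as [[j Hj] [d [Hd Hiso]]].
  destruct (archimed_cor1 (d / 2) ltac:(lra)) as [N [HN HN0]].
  assert (HNp : 0 < INR N) by (apply lt_0_INR; exact HN0).
  set (zq := up (x * INR N)). set (zp := (zq - 2)%Z).
  destruct (archimed (x * INR N)) as [A1 A2]. fold zq in A1, A2.
  assert (Ezp : IZR zp = IZR zq - 2) by (unfold zp; rewrite minus_IZR; reflexivity).
  exists (enc j zp zq N).
  destruct (enc_spec j zp zq N) as (E1 & E2 & E3 & E4).
  set (n := enc j zp zq N) in *.
  assert (Hp : IZR zp / INR N < x).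
  { apply (Rmult_lt_reg_r (INR N)); [exact HNp|]. unfold Rdiv. rewrite Rmult_assoc, Rinv_l by lra. lra. }
  assert (Hq : x < IZR zq / INR N).
  { apply (Rmult_lt_reg_r (INR N)); [exact HNp|]. unfold Rdiv. rewrite Rmult_assoc, Rinv_l by lra. lra. }
  assert (Hw : IZR zq / INR N - IZR zp / INR N = 2 * / INR N) by (rewrite Ezp; field; lra).
  assert (HPx : P n x).
  { unfold P. rewrite E1, E2, E3, E4. split; [exact Hj|]. split; [lra|].
    intros y Hy Hfy. apply Hiso.
    - apply Rabs_def1; lra.
    - rewrite Hfy, Hj. reflexivity. }
  pose proof (epsilon_spec (inhabits 0) (P n) (ex_intro _ x HPx)) as He.
  set (ee := epsilon (inhabits 0) (P n)) in *.
  destruct HPx as (_ & _ & Hu). destruct He as (Hf1 & Hf2 & _).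
  symmetry. apply Hu; assumption.
Qed.

Lemma sgn_sq x y : (sgn x * y) ^ 2 = y ^ 2.
Proof. unfold sgn. destruct (Rle_dec _ _); ring. Qed.

Lemma E1_eq kappa a f da df :
  Defs.E1 kappa a (fun r => phi (f r)) da (fun r => sgn (f r) * df r) = Defs.E1 kappa a f da df.
Proof.
  apply functional_extensionality. intro r. unfold Defs.E1. cbv beta.
  rewrite phi_sin, sgn_sq. reflexivity.
Qed.

Lemma E1_nonneg kappa a f da df r : 0 < kappa -> 0 < r -> 0 <= Defs.E1 kappa a f da df r.
Proof.
  intros Hk Hr. unfold Defs.E1, Rdiv.
  assert (Hi : 0 <= / r ^ 2) by (apply Rlt_le, Rinv_0_lt_compat, pow_lt; lra).
  pose proof (pow2_ge_0 (da r)). pose proof (pow2_ge_0 (a r ^ 2 - 1)).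
  pose proof (pow2_ge_0 (df r)). pose proof (pow2_ge_0 (a r)).
  pose proof (pow2_ge_0 (sin (f r))). pose proof (pow2_ge_0 r).
  assert (0 <= (a r ^ 2 - 1) ^ 2 * / r ^ 2) by (apply Rmult_le_pos; lra).
  assert (0 <= r ^ 2 * df r ^ 2) by (apply Rmult_le_pos; lra).
  assert (Has : 0 <= a r ^ 2 * sin (f r) ^ 2) by (apply Rmult_le_pos; lra).
  assert (0 <= a r ^ 2 * sin (f r) ^ 2 * / r ^ 2) by (apply Rmult_le_pos; lra).
  assert (0 <= 2 * kappa * a r ^ 2 * sin (f r) ^ 2) by
    (rewrite Rmult_assoc; apply Rmult_le_pos; [|exact Has]; apply Rmult_le_pos; lra).
  assert (0 <= 2 * kappa * a r ^ 2 * sin (f r) ^ 2 *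
    (2 * df r ^ 2 + a r ^ 2 * sin (f r) ^ 2 * / r ^ 2)) by (apply Rmult_le_pos; lra).
  lra.
Qed.

Lemma E2_nonneg a g dg r : 0 <= Defs.E2 a g dg r.
Proof.
  unfold Defs.E2. pose proof (pow2_ge_0 (dg r)). pose proof (pow2_ge_0 (a r)).
  pose proof (pow2_ge_0 (g r)). pose proof (pow2_ge_0 r).
  assert (0 <= r ^ 2 * dg r ^ 2) by (apply Rmult_le_pos; lra).
  assert (0 <= 2 * a r ^ 2 * g r ^ 2) by (apply Rmult_le_pos; [apply Rmult_le_pos|]; lra).
  lra.
Qed.

Lemma lower_sums_mono h1 h2 v : (forall x, 0 < x -> h1 x <= h2 x) ->
  lower_sums h1 v -> lower_sums h2 v.
Proof.
  intros H (n & c & K & m & H1 & H2 & H3). exists n, c, K, m. split; [|split]; auto.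
  intros i Hi. destruct (H1 i Hi) as (B1 & B2 & B3 & B4 & B5).
  split; [auto|split;[auto|split;[auto|split;[auto|]]]]. intros x Kx. specialize (B5 x Kx). specialize (B3 x Kx).
  specialize (H x B3). lra.
Qed.

Lemma integral_exists h H I : (forall x, 0 < x -> h x <= H x) ->
  nonneg_integral H I -> exists I', nonneg_integral h I'.
Proof.
  intros Hle HI.
  assert (Hb : bound (lower_sums h)).
  { exists I. intros v Hv. apply HI. exact (lower_sums_mono h H v Hle Hv). }
  assert (Hne : exists v, lower_sums h v).
  { exists 0. exists O, (fun _ => 0), (fun _ _ => False), (fun _ => 0).
    split; [intros i Hi; lia|]. split; [intros; lia|]. reflexivity. }
  destruct (completeness _ Hb Hne) as [m Hm]. exists m. exact Hm.
Qed.

Lemma L_exists kappa a f g da df dg I : 0 < kappa ->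
  nonneg_integral (fun r => Defs.E1 kappa a f da df r + Defs.E2 a g dg r) I ->
  exists l, L_is kappa a f g da df dg l.
Proof.
  intros Hk HI.
  destruct (integral_exists (fun r => Rmax 0 (Defs.E1 kappa a f da df r - Defs.E2 a g dg r)) (fun r => Defs.E1 kappa a f da df r + Defs.E2 a g dg r) I) as [Ip HIp];
  [| exact HI |].
  { intros x Hx. pose proof (E1_nonneg kappa a f da df x Hk Hx). pose proof (E2_nonneg a g dg x).
    unfold Rmax; destruct (Rle_dec _ _); lra. }
  destruct (integral_exists (fun r => Rmax 0 (- (Defs.E1 kappa a f da df r - Defs.E2 a g dg r))) (fun r => Defs.E1 kappa a f da df r + Defs.E2 a g dg r) I) as [In HIn];
  [| exact HI |].
  { intros x Hx. pose proof (E1_nonneg kappa a f da df x Hk Hx). pose proof (E2_nonneg a g dg x).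
    unfold Rmax; destruct (Rle_dec _ _); lra. }
  exists (Ip - In). exists Ip, In. split; [exact HIp|]. split; [exact HIn| reflexivity].
Qed.

Theorem lemma3p1 (kappa omega q : R) (a f g da df dg : R -> R) :
  0 < kappa -> PI / 2 < omega < PI -> 0 < q ->
  in_C kappa omega q a f g da df dg ->
  exists ft dft : R -> R,
    (forall r, 0 <= r -> 0 <= ft r <= PI / 2) /\
    in_C kappa omega q a ft g da dft dg /\
    exists l_t l, L_is kappa a ft g da dft dg l_t /\
                  L_is kappa a f g da df dg l /\ l_t <= l.
Proof.
  intros Hk Hw Hq [Hadm HC].
  destruct Hadm as (ca & cf & cg & aca & acf & acg & dA & dF & dG & a0 & la & f0 & lf & lg & [I HI]).
  exists (fun r => phi (f r)), (fun r => sgn (f r) * df r).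
  pose proof (E1_eq kappa a f da df) as EE.
  split; [intros r _; split; [apply phi_ge0 | apply phi_le]|].
  destruct (L_exists kappa a f g da df dg I Hk HI) as [l Hl].
  split.
  2: { exists l, l. unfold L_is in *. rewrite EE. split; [exact Hl|]. split; [exact Hl| lra]. }
  split; [|exact HC].
  assert (Hc : phi (PI - omega) = PI - omega) by (apply phi_small; lra).
  repeat split; auto.
  - intros x Hx eps He. destruct (cf x Hx eps He) as [d [Hd Hy]]. exists d. split; auto.
    intros y Hy0 Hyx. eapply Rle_lt_trans; [apply phi_lip| exact (Hy y Hy0 Hyx)].
  - intros c d Hc0 Hcd eps He. destruct (acf c d Hc0 Hcd eps He) as [del [Hdel Hs]].
    exists del. split; auto. intros n x y Hxy Hsum.
    eapply Rle_lt_trans; [| exact (Hs n x y Hxy Hsum)].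
    apply rsum_le. intros i _. apply phi_lip.
  -
    set (Zs := fun r => 0 < r /\ derivable_pt_lim f r (df r) /\ df r <> 0 /\
                        exists j : Z, f r = IZR j * (PI / 2)).
    destruct (isolated_enum f (PI / 2) Zs) as [e He].
    { intros x (_ & Hd & Hn & Hj). split; [exact Hj|]. exact (iso f x (df x) Hd Hn). }
    apply null_sub with (B := fun x => (0 < x /\ ~ derivable_pt_lim f x (df x)) \/ Zs x).
    2: { apply null_union; [exact dF| exact (null_countable Zs e He)]. }
    intros r [Hr Hn].
    destruct (classic (derivable_pt_lim f r (df r))) as [Hd|Hd]; [right|left; auto].
    destruct (classic (0 < Rabs (f r - PI * IZR (kk (f r))) < PI / 2)) as [Hkk|Hkk].
    { exfalso. apply Hn. exact (comp_good f r (df r) Hd Hkk). }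
    destruct (Req_dec (df r) 0) as [E0|E0].
    { exfalso. apply Hn. rewrite E0, Rmult_0_r. rewrite E0 in Hd. exact (comp_flat f r Hd). }
    split; [exact Hr|]. split; [exact Hd|]. split; [exact E0|]. exact (kink_case _ Hkk).
  - rewrite f0. apply phi_small. pose proof PI_gt0. lra.
  - intros eps He. destruct (lf eps He) as [M HM]. exists M. intros r Hr.
    cbv beta. rewrite <- Hc. eapply Rle_lt_trans; [apply phi_lip| exact (HM r Hr)].
  - exists I. rewrite EE. exact HI.
Qed.
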